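(* Let $m,n,s,k$ be integers such that $2\leqslant s\leqslant n$, $2\leqslant k\leqslant m$ and $ms=nk$. Let $c\geqslant 1$, let $\Gamma$ be an abelian group of order $nkc$, and let $d=\gcd(s,k)$. If there exists an $\mathrm{MRS}_\Gamma(k/d,\, s;\, mdc/k)$, then there exists an $\mathrm{MRS}_\Gamma(m,n;s,k;c)$.
   Context: For an abelian group $\Gamma$ of order $abc$, an $\mathrm{MRS}_\Gamma(a,b;c)$ is a collection of $c$ (completely filled) arrays of size $a\times b$ whose entries are the elements of $\Gamma$, each appearing exactly once and in a unique array, such that there are $\omega,\delta\in\Gamma$ with every row sum equal to $\omega$ and every column sum equal to $\delta$. For positive integers $m,n,s,k,c$ and an abelian group $\Gamma$ of order $nkc$, an $\mathrm{MRS}_\Gamma(m,n;s,k;c)$ is a set of $c$ partially filled $m\times n$ arrays (some cells may be empty) with entries in $\Gamma$ such that: every element of $\Gamma$ appears exactly once and in a unique array; in every array each row contains exactly $s$ filled cells and each column contains exactly $k$ filled cells; and there exist $\omega,\delta\in\Gamma$ such that in every array each row sum is $\omega$ and each column sum is $\delta$. *)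

(* Defs.v *)
From HB Require Import structures.
From mathcomp Require Import all_boot all_order all_algebra.
Set Implicit Arguments. Unset Strict Implicit. Unset Printing Implicit Defensive.
Import GRing.Theory.
Local Open Scope ring_scope.

(* MRS_Gamma(a,b;c): c completely filled a x b arrays, given by
   A : 'I_c -> 'I_a -> 'I_b -> Gamma (A t i j = entry in row i, column j
   of array t); every element of Gamma appears exactly once overall;
   all row sums equal omega and all column sums equal delta. *)
Definition MRS_full (G : finZmodType) (a b c : nat) : Prop :=
  exists A : 'I_c -> 'I_a -> 'I_b -> G,
    (forall g : G,
        #|[set x : 'I_c * 'I_a * 'I_b | A x.1.1 x.1.2 x.2 == g]| = 1%N) /\
    exists omega delta : G,
      (forall t i, \sum_(j < b) A t i j = omega) /\
      (forall t j, \sum_(i < a) A t i j = delta).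

(* MRS_Gamma(m,n;s,k;c): c partially filled m x n arrays, given by
   A : 'I_c -> 'I_m -> 'I_n -> option Gamma (None = empty cell). *)
Definition MRS_partial (G : finZmodType) (m n s k c : nat) : Prop :=
  exists A : 'I_c -> 'I_m -> 'I_n -> option G,
    (forall g : G,
        #|[set x : 'I_c * 'I_m * 'I_n | A x.1.1 x.1.2 x.2 == Some g]| = 1%N) /\
    (forall t i, #|[set j : 'I_n | A t i j != None]| = s) /\
    (forall t j, #|[set i : 'I_m | A t i j != None]| = k) /\
    exists omega delta : G,
      (forall t i, \sum_(j < n | A t i j != None) odflt 0 (A t i j) = omega) /\
      (forall t j, \sum_(i < m | A t i j != None) odflt 0 (A t i j) = delta).

(* Main.v *)
Require Import Defs.
From mathcomp Require Import all_boot all_order all_algebra.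
From mathcomp Require Import zify.
Set Implicit Arguments. Unset Strict Implicit. Unset Printing Implicit Defensive.
Import GRing.Theory.

Lemma ord_prod_pos x y (i : 'I_(x * y)) : (0 < y)%N.
Proof. case: i => i Hi; case: y Hi => [|y] //; by rewrite muln0. Qed.

Lemma dec1_proof x y (i : 'I_(x * y)) : (i %/ y < x)%N.
Proof. by rewrite ltn_divLR ?(ord_prod_pos i) // -mulnC. Qed.
Lemma dec2_proof x y (i : 'I_(x * y)) : (i %% y < y)%N.
Proof. by rewrite ltn_pmod ?(ord_prod_pos i). Qed.
Definition dec x y (i : 'I_(x * y)) : 'I_x * 'I_y :=
  (Ordinal (dec1_proof i), Ordinal (dec2_proof i)).
Lemma enc_proof x y (p : 'I_x * 'I_y) : (p.1 * y + p.2 < x * y)%N.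
Proof. case: p => [[i Hi] [j Hj]] /=; nia. Qed.
Definition enc x y (p : 'I_x * 'I_y) : 'I_(x * y) := Ordinal (enc_proof p).
Arguments dec : simpl never.
Arguments enc : simpl never.

Lemma encK x y : cancel (@enc x y) (@dec x y).
Proof.
case=> [[i Hi] [j Hj]]; rewrite /dec /enc /=.
congr (_, _); apply: val_inj => /=.
  by rewrite divnMDl ?divn_small ?addn0 //; lia.
by rewrite modnMDl modn_small.
Qed.
Lemma decK x y : cancel (@dec x y) (@enc x y).
Proof. move=> i; apply: val_inj => /=; by rewrite -divn_eq. Qed.

Lemma big_bij (R : Type) (idx : R) (op : Monoid.com_law idx) (T U : finType)
  (P : pred T) (h : U -> T) (F : T -> R) :
  injective h -> (forall u, P (h u)) -> (forall x, P x -> exists u, h u = x) ->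
  \big[op/idx]_(x | P x) F x = \big[op/idx]_u F (h u).
Proof.
move=> hI hP hS.
have -> : \big[op/idx]_(x | P x) F x = \big[op/idx]_(x in [set h u | u in [set: U]]) F x.
  apply: eq_bigl => x; apply/idP/imsetP.
    by move/hS=> [u <-]; exists u; rewrite ?inE.
  by move=> [u _ ->].
rewrite big_imset; last by move=> u1 u2 _ _; apply: hI.
by apply: eq_bigl => u; rewrite inE.
Qed.

Lemma core (G : finZmodType) a b d q c : (d <= q.+1)%N ->
  MRS_full G a (d * b) (q.+1 * c) -> MRS_partial G (q.+1 * a) (q.+1 * b) (d * b) (d * a) c.
Proof.
move=> Hd [A [Huniq [om [de [Hrow Hcol]]]]].
pose w (l : 'I_d) : 'I_q.+1 := widen_ord Hd l.
pose B (e : 'I_c) (i : 'I_(q.+1 * a)) (j : 'I_(q.+1 * b)) : option G :=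
  match (insub (val ((dec j).1 - (dec i).1)%R) : option 'I_d) with
  | Some l => Some (A (enc ((dec i).1, e)) (dec i).2 (enc (l, (dec j).2)))
  | None => None end.
have Bsome : forall e i j, B e i j != None -> exists l : 'I_d,
    w l = ((dec j).1 - (dec i).1)%R /\
    B e i j = Some (A (enc ((dec i).1, e)) (dec i).2 (enc (l, (dec j).2))).
  move=> e i j; rewrite /B; case: insubP => [l _ Hl _ | //].
  by exists l; split => //; apply: val_inj.
have Bval : forall e t r l p,
    B e (enc (t, r)) (enc (w l + t, p)%R) = Some (A (enc (t, e)) r (enc (l, p))).
  move=> e t r l p; rewrite /B !encK addrK.
  case: insubP => [l' _ Hl' | ]; last by rewrite /= ltn_ord.
  by congr (Some (A _ _ (enc (_, _)))); apply: val_inj.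
have Bval' : forall e i l p,
    B e i (enc (w l + (dec i).1, p)%R) = Some (A (enc ((dec i).1, e)) (dec i).2 (enc (l, p))).
  move=> e i l p; rewrite /B !encK addrK.
  case: insubP => [l' _ Hl' | ]; last by rewrite /= ltn_ord.
  by congr (Some (A _ _ (enc (_, _)))); apply: val_inj.
have Bcol : forall e j l r,
    B e (enc ((dec j).1 - w l, r)%R) j = Some (A (enc ((dec j).1 - w l, e)%R) r (enc (l, (dec j).2))).
  move=> e j l r; rewrite /B !encK subKr.
  case: insubP => [l' _ Hl' | ]; last by rewrite /= ltn_ord.
  by congr (Some (A _ _ (enc (_, _)))); apply: val_inj.
exists B; split.
  move=> g; have /eqP/cards1P [[[t' r] col] Hy0] := Huniq g.
  have HAg : A t' r col = g.
    by have := set11 ((t', r), col); rewrite -Hy0 inE => /eqP.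
  apply/eqP/cards1P.
  exists ((((dec t').2, enc ((dec t').1, r))), enc (w (dec col).1 + (dec t').1, (dec col).2))%R.
  apply/setP => [[[e i] j]]; rewrite inE in_set1; apply/eqP/eqP.
    move=> HB; have HBn : B e i j != None by rewrite HB.
    have [l [Hl HB2]] := Bsome e i j HBn.
    rewrite HB2 in HB; case: HB => HA.
    have Hy : ((enc ((dec i).1, e), (dec i).2), enc (l, (dec j).2)) = ((t', r), col).
      by apply/set1P; rewrite -Hy0 inE /= HA.
    have Ht : enc ((dec i).1, e) = t' := congr1 (fun x => x.1.1) Hy.
    have Hr : (dec i).2 = r := congr1 (fun x => x.1.2) Hy.
    have Hc : enc (l, (dec j).2) = col := congr1 (fun x => x.2) Hy.
    rewrite -Ht -Hc -Hr !encK Hl subrK.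
    by rewrite -!surjective_pairing !decK.
  move=> ->.
  rewrite Bval -!surjective_pairing !decK HAg //.
have rowbij : forall (R : Type) (idx : R) (op : Monoid.com_law idx) (F : 'I_(q.+1 * b) -> R) e i,
    \big[op/idx]_(j | B e i j != None) F j =
    \big[op/idx]_(u : 'I_d * 'I_b) F (enc (w u.1 + (dec i).1, u.2)%R).
  move=> R idx op F e i.
  apply: big_bij.
  - move=> [l1 p1] [l2 p2] /(congr1 (@dec _ _)); rewrite !encK => E.
    have H1 : (w l1 + (dec i).1 = w l2 + (dec i).1)%R := congr1 fst E.
    have H2 : p1 = p2 := congr1 snd E.
    rewrite H2; congr (_, _); apply: val_inj.
    by have := congr1 val (addIr _ H1).
  - by move=> u; rewrite Bval'.
  - move=> x /Bsome [l [Hl _]]; exists (l, (dec x).2).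
    have -> : w (l, (dec x).2).1 = ((dec x).1 - (dec i).1)%R := Hl.
    by rewrite subrK -surjective_pairing decK.
have colbij : forall (R : Type) (idx : R) (op : Monoid.com_law idx) (F : 'I_(q.+1 * a) -> R) e j,
    \big[op/idx]_(i | B e i j != None) F i =
    \big[op/idx]_(u : 'I_d * 'I_a) F (enc ((dec j).1 - w u.1, u.2)%R).
  move=> R idx op F e j.
  apply: big_bij.
  - move=> [l1 p1] [l2 p2] /(congr1 (@dec _ _)); rewrite !encK => E.
    have H1 : ((dec j).1 - w l1 = (dec j).1 - w l2)%R := congr1 fst E.
    have H2 : p1 = p2 := congr1 snd E.
    rewrite H2; congr (_, _); apply: val_inj.
    have H3 : ((dec j).1 - ((dec j).1 - w l1) = (dec j).1 - ((dec j).1 - w l2))%R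
      := congr1 (fun x => (dec j).1 - x)%R H1.
    by move: H3; rewrite !subKr => /(congr1 val).
  - by move=> u; rewrite Bcol.
  - move=> x /Bsome [l [Hl _]]; exists (l, (dec x).2).
    have -> : w (l, (dec x).2).1 = ((dec j).1 - (dec x).1)%R := Hl.
    by rewrite subKr -surjective_pairing decK.
split.
  move=> e i; rewrite -sum1_card.
  rewrite (eq_bigl (fun j => B e i j != None)); last by move=> j; rewrite inE.
  by rewrite rowbij sum1_card card_prod !card_ord.
split.
  move=> e j; rewrite -sum1_card.
  rewrite (eq_bigl (fun i => B e i j != None)); last by move=> i; rewrite inE.
  by rewrite colbij sum1_card card_prod !card_ord.
exists om, (de *+ d)%R; split.
  move=> e i; rewrite rowbij -(Hrow (enc ((dec i).1, e)) (dec i).2).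
  rewrite [RHS](big_bij _ (h := @enc d b) (P := predT)) //.
  - apply: eq_bigr => u _.
    by rewrite Bval' -surjective_pairing.
  - exact: can_inj (@encK _ _).
  - by move=> x _; exists (dec x); rewrite decK.
move=> e j; rewrite colbij.
rewrite -(pair_bigA _ (fun l r => odflt 0%R (B e (enc ((dec j).1 - w l, r)%R) j))).
rewrite (eq_bigr (fun _ => de)); last first.
  move=> l _; rewrite -(Hcol (enc ((dec j).1 - w l, e)%R) (enc (l, (dec j).2))).
  by apply: eq_bigr => r _; rewrite Bcol.
by rewrite sumr_const card_ord.
Qed.
Theorem lemma5p11 (m n s k c : nat) (G : finZmodType) :
  (2 <= s <= n)%N -> (2 <= k <= m)%N -> (m * s = n * k)%N -> (1 <= c)%N ->
  #|G| = (n * k * c)%N ->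
  let d := gcdn s k in
  MRS_full G (k %/ d) s (m * d * c %/ k) ->
  MRS_partial G m n s k c.
Proof.
move=> /andP[s2 sn] /andP[k2 km] Hms c1 HG d HA.
have d0 : 0 < d by rewrite /d gcdn_gt0; apply/orP; left; lia.
set a := k %/ d; set b := s %/ d.
have Ek : k = d * a by rewrite /a mulnC divnK ?dvdn_gcdr.
have Es : s = d * b by rewrite /b mulnC divnK ?dvdn_gcdl.
have cop : coprime a b.
  have H : d * gcdn b a = d * 1 by rewrite muln1 muln_gcdr -Es -Ek.
  by rewrite /coprime gcdnC -(eqn_pmul2l d0) H.
have Hmb : m * b = n * a.
  apply/eqP; rewrite -(eqn_pmul2l d0) mulnCA -Es mulnCA -Ek; exact/eqP.
have a0 : 0 < a by move: Ek k2; case: (a) => //; rewrite muln0 => ->.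
have dam : a %| m by rewrite -(Gauss_dvdl _ cop) Hmb dvdn_mull.
set Q := m %/ a.
have Em : m = Q * a by rewrite /Q divnK.
have En : n = Q * b.
  apply/eqP; rewrite -(eqn_pmul2r a0) -Hmb Em; apply/eqP; by rewrite mulnAC.
have EC : m * d * c %/ k = Q * c.
  have -> : m * d * c = Q * c * k by rewrite Em Ek; nia.
  by rewrite mulnK // Ek muln_gt0 d0 a0.
have Hd : d <= Q by rewrite -(leq_pmul2r a0) -Em -Ek.
have Q0 : 0 < Q by lia.
have EQ : Q = Q.-1.+1 by rewrite prednK.
have HA' : MRS_full G a (d * b) (Q.-1.+1 * c) by rewrite -Es -EQ -EC.
have := core (leq_trans Hd (eq_leq EQ)) HA'.
by rewrite -EQ -Es -Ek -Em -En.
Qed.
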